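(* Let $\mathbf{X}$ be a computable metric space. Then the map $(U_n)_{n\in\mathbb{N}}\mapsto\bigcup_{n\in\mathbb{N}}(X\setminus U_n):\mathcal{C}(\mathbb{N},\mathcal{O}(\mathbf{X}))\to\mathcal{O}'(\mathbf{X})$ admits a computable multi-valued inverse; i.e. there is a computable procedure that, given any $U\in\mathcal{O}'(\mathbf{X})$, produces a sequence $(U_n)_{n\in\mathbb{N}}$ of open sets with $U=\bigcup_{n}(X\setminus U_n)$.
   Context: Represented spaces $(X,\delta_X)$ with $\delta_X:\subseteq\mathbb{N}^\mathbb{N}\to X$ partial surjective; computable maps via computable realizers; $\mathcal{C}(\mathbf{X},\mathbf{Y})$ the represented space of continuous maps; $\mathbb{N}$ represented by $\delta_\mathbb{N}(0^n10^\mathbb{N})=n$. A computable metric space carries its Cauchy representation. $\mathbb{S}=(\{\bot,\top\},\delta_\mathbb{S})$, $\delta_\mathbb{S}(0^\mathbb{N})=\bot$, $\delta_\mathbb{S}(p)=\top$ otherwise; $\mathcal{O}(\mathbf{X})=\mathcal{C}(\mathbf{X},\mathbb{S})$ (open sets, identified with subsets). $\lim(p)(n)=\lim_{i\to\infty}p(\langle n,i\rangle)$; $\mathbb{S}'=(\{\bot,\top\},\delta_\mathbb{S}\circ\lim)$; $\mathcal{O}'(\mathbf{X})=\mathcal{C}(\mathbf{X},\mathbb{S}')$, identified with subsets of $X$. *)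

(* Defs.v *)
From Stdlib Require Import Reals List Arith Lia.
Import ListNotations.
Open Scope R_scope.

Inductive PR : Type :=
| PZero : PR
| PSucc : PR
| PProj : nat -> PR
| PComp : PR -> list PR -> PR
| PRec  : PR -> PR -> PR
| PMu   : PR -> PR.

Inductive eval : PR -> list nat -> nat -> Prop :=
| ev_zero v : eval PZero v 0
| ev_succ x v : eval PSucc (x :: v) (S x)
| ev_proj i v : (i < length v)%nat -> eval (PProj i) v (nth i v 0%nat)
| ev_comp f gs v ws y : evals gs v ws -> eval f ws y -> eval (PComp f gs) v y
| ev_rec0 f g v y : eval f v y -> eval (PRec f g) (0%nat :: v) y
| ev_recS f g n v y z : eval (PRec f g) (n :: v) y -> eval g (n :: y :: v) z ->
    eval (PRec f g) (S n :: v) z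
| ev_mu f v n : eval f (n :: v) 0%nat ->
    (forall m, (m < n)%nat -> exists k, eval f (m :: v) (S k)) -> eval (PMu f) v n
with evals : list PR -> list nat -> list nat -> Prop :=
| evs_nil v : evals [] v []
| evs_cons g gs v w ws : eval g v w -> evals gs v ws -> evals (g :: gs) v (w :: ws).

Definition computable_nat (h : nat -> nat) : Prop :=
  exists c : PR, forall n, eval c [n] (h n).

Definition baire := nat -> nat.

Definition cpair (x y : nat) : nat := ((x + y) * (x + y + 1)) / 2 + y.

Definition code_list (l : list nat) : nat :=
  fold_right (fun x c => S (cpair x c)) 0%nat l.

Definition pref (p : baire) (m : nat) : list nat := map p (seq 0 m).

(** [runs a p q]: the oracle machine given by the associate [a] (answer 0 =
    "read more input", answer k+1 = "write k") on input p produces the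
    infinite output q. *)
Definition runs (a : baire) (p q : baire) : Prop :=
  forall n, exists m,
    a (cpair n (code_list (pref p m))) <> 0%nat /\
    (forall m', (m' < m)%nat -> a (cpair n (code_list (pref p m'))) = 0%nat) /\
    q n = pred (a (cpair n (code_list (pref p m)))).

Record rep_space := RepSpace {
  carrier :> Type;
  delta : baire -> carrier -> Prop
}.

Definition realizes (X Y : rep_space) (a : baire) (f : X -> Y) : Prop :=
  forall p x, delta X p x -> exists q, runs a p q /\ delta Y q (f x).

Definition computable_mv (X Y : rep_space) (R : X -> Y -> Prop) : Prop :=
  exists a : baire, computable_nat a /\
    forall p x, delta X p x ->
      exists q, runs a p q /\ exists y, delta Y q y /\ R x y.

Definition rep_nat : rep_space :=
  RepSpace nat (fun p n => forall k, p k = (if Nat.eqb k n then 1%nat else 0%nat)).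

(** Sierpinski space S = {bot, top}; we model bot as False and top as True
    (points are Props, top = the true ones): delta_S(0^omega) = bot, else top. *)
Definition delta_S (p : baire) (P : Prop) : Prop :=
  (P <-> exists n, p n <> 0%nat).
Definition rep_S : rep_space := RepSpace Prop delta_S.

Definition lim_rel (p r : baire) : Prop :=
  forall n, exists i0, forall i, (i0 <= i)%nat -> p (cpair n i) = r n.

Definition rep_S' : rep_space :=
  RepSpace Prop (fun p P => exists r, lim_rel p r /\ delta_S r P).

Definition rep_C (X Y : rep_space) : rep_space :=
  RepSpace (X -> Y) (fun a f => realizes X Y a f).

Definition rep_O (X : rep_space) : rep_space := rep_C X rep_S.
Definition rep_O' (X : rep_space) : rep_space := rep_C X rep_S'.

Record cmetric_space := CMetric {
  cm_X :> Type;
  cm_d : cm_X -> cm_X -> R;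
  cm_d_nonneg : forall x y, 0 <= cm_d x y;
  cm_d_eq0 : forall x y, cm_d x y = 0 <-> x = y;
  cm_d_sym : forall x y, cm_d x y = cm_d y x;
  cm_d_tri : forall x y z, cm_d x z <= cm_d x y + cm_d y z;
  cm_seq : nat -> cm_X;
  cm_dense : forall x eps, 0 < eps -> exists i, cm_d x (cm_seq i) < eps;
  cm_dist_computable : exists num neg den : nat -> nat,
      computable_nat num /\ computable_nat neg /\ computable_nat den /\
      forall i j k,
        Rabs ((INR (num (cpair (cpair i j) k)) - INR (neg (cpair (cpair i j) k)))
                / INR (S (den (cpair (cpair i j) k)))
              - cm_d (cm_seq i) (cm_seq j)) <= / 2 ^ k
}.

Definition cauchy (M : cmetric_space) : rep_space :=
  RepSpace M (fun p x => forall i, cm_d M (cm_seq M (p i)) x <= / 2 ^ i).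

(* Main.v *)
Require Import Defs.
From Stdlib Require Import Reals List Arith Lia Lra ZArith Classical IndefiniteDescription.
Import ListNotations.

Inductive E : Type :=
| Var : nat -> E
| Cst : nat -> E
| Suc : E -> E
| Rc : E -> E -> E -> E
| Ext : PR -> (nat -> nat) -> E -> E.

Fixpoint evalE (e : E) (env : list nat) : nat :=
  match e with
  | Var i => nth i env 0%nat
  | Cst k => k
  | Suc e => S (evalE e env)
  | Rc n z s => nat_rect (fun _ => nat) (evalE z env)
                   (fun i acc => evalE s (i :: acc :: env)) (evalE n env)
  | Ext _ h e => h (evalE e env)
  end.

Fixpoint ext_ok (e : E) : Prop :=
  match e with
  | Var _ | Cst _ => True
  | Suc e => ext_ok e
  | Rc n z s => ext_ok n /\ ext_ok z /\ ext_ok s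
  | Ext c h e => (forall m, eval c [m] (h m)) /\ ext_ok e
  end.

Fixpoint cstPR (k : nat) : PR :=
  match k with 0 => PZero | S k => PComp PSucc [cstPR k] end.

Fixpoint compile (n : nat) (e : E) : PR :=
  match e with
  | Var i => if Nat.ltb i n then PProj i else PZero
  | Cst k => cstPR k
  | Suc e => PComp PSucc [compile n e]
  | Rc c z s => PComp (PRec (compile n z) (compile (S (S n)) s))
                  (compile n c :: map PProj (seq 0 n))
  | Ext c _ e => PComp c [compile n e]
  end.

Lemma cstPR_ok k v : eval (cstPR k) v k.
Proof.
  induction k; simpl. constructor.
  econstructor. constructor. exact IHk. constructor. constructor.
Qed.


Lemma evals_ids_gen v : forall s, (s <= length v)%nat ->
  evals (map PProj (seq s (length v - s))) v (skipn s v).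
Proof.
  intros s Hs. remember (length v - s)%nat as r. revert s Hs Heqr.
  induction r; intros s Hs Heqr; simpl.
  - replace (skipn s v) with (@nil nat). constructor.
    symmetry. apply skipn_all2. lia.
  - assert (Hlt : (s < length v)%nat) by lia.
    assert (skipn s v = nth s v 0%nat :: skipn (S s) v).
    { clear -Hlt. revert s Hlt. induction v; intros s Hlt; simpl in *. lia.
      destruct s. reflexivity. simpl. apply IHv. lia. }
    rewrite H. constructor. constructor. exact Hlt.
    apply IHr; lia.
Qed.

Lemma evals_ids v : evals (map PProj (seq 0 (length v))) v v.
Proof.
  pose proof (evals_ids_gen v 0 ltac:(lia)). rewrite Nat.sub_0_r in H. exact H.
Qed.

Theorem compile_ok : forall e n env, length env = n -> ext_ok e ->
  eval (compile n e) env (evalE e env).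
Proof.
  induction e; intros m env Hl Hok; simpl in *.
  - destruct (Nat.ltb_spec n m).
    + constructor. lia.
    + rewrite nth_overflow by lia. constructor.
  - apply cstPR_ok.
  - econstructor. constructor. apply IHe; auto. constructor. constructor.
  - destruct Hok as (H1 & H2 & H3).
    econstructor. constructor. apply IHe1; auto. subst m. apply evals_ids.
    generalize (evalE e1 env). intro k. induction k; simpl.
    + constructor. apply IHe2; auto.
    + econstructor. exact IHk. apply IHe3; simpl; auto.
  - destruct Hok as [H1 H2].
    econstructor. constructor. apply IHe; auto. constructor. apply H1.
Qed.

Lemma E_computable (e : E) : ext_ok e ->
  computable_nat (fun n => evalE e [n]).
Proof.
  intros H. exists (compile 1 e). intros n. apply compile_ok; auto.
Qed.

Fixpoint lift (c k : nat) (e : E) : E :=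
  match e with
  | Var i => if Nat.ltb i c then Var i else Var (i + k)
  | Cst n => Cst n
  | Suc e => Suc (lift c k e)
  | Rc n z s => Rc (lift c k n) (lift c k z) (lift (S (S c)) k s)
  | Ext p h e => Ext p h (lift c k e)
  end.

Lemma lift_ok : forall e pre ins env,
  evalE (lift (length pre) (length ins) e) (pre ++ ins ++ env) = evalE e (pre ++ env).
Proof.
  induction e; intros pre ins env; simpl.
  - destruct (Nat.ltb_spec n (length pre)).
    + simpl. rewrite !app_nth1 by lia. reflexivity.
    + simpl. rewrite app_nth2 by lia. rewrite (app_nth2 pre) by lia.
      rewrite app_nth2 by lia. f_equal. lia.
  - reflexivity.
  - rewrite IHe. reflexivity.
  - rewrite IHe1, IHe2. generalize (evalE e1 (pre ++ env)). intro k.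
    induction k; simpl. reflexivity. rewrite IHk.
    set (a := nat_rect _ _ _ k).
    specialize (IHe3 (k :: a :: pre) ins env). simpl in IHe3. exact IHe3.
  - rewrite IHe. reflexivity.
Qed.

Lemma ext_ok_lift : forall e c k, ext_ok e -> ext_ok (lift c k e).
Proof.
  induction e; intros c k H; simpl in *.
  - destruct (Nat.ltb n c); exact I.
  - exact I.
  - auto.
  - destruct H as (?&?&?). auto.
  - destruct H. auto.
Qed.

Open Scope nat_scope.

Lemma lift02 e a b env : evalE (lift 0 2 e) (a :: b :: env) = evalE e env.
Proof. exact (lift_ok e [] [a;b] env). Qed.
Lemma lift01 e a env : evalE (lift 0 1 e) (a :: env) = evalE e env.
Proof. exact (lift_ok e [] [a] env). Qed.
Lemma lift11 e i a env : evalE (lift 1 1 e) (i :: a :: env) = evalE e (i :: env).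
Proof. exact (lift_ok e [i] [a] env). Qed.

Definition predE x := Rc x (Cst 0) (Var 0).
Definition addE x y := Rc x y (Suc (Var 1)).
Definition subE x y := Rc y x (predE (Var 1)).
Definition mulE x y := Rc x (Cst 0) (addE (Var 1) (lift 0 2 y)).
Definition ifzE c a b := Rc c a (lift 0 2 b).
Definition pow2E x := Rc x (Cst 1) (addE (Var 1) (Var 1)).
Definition notE a := ifzE a (Cst 1) (Cst 0).
Definition andE a b := ifzE a (Cst 0) b.
Definition orE a b := ifzE a b (Cst 1).
Definition bE a := ifzE a (Cst 0) (Cst 1).
Definition leE x y := notE (subE x y).
Definition ltE x y := leE (Suc x) y.
Definition eqE x y := andE (leE x y) (leE y x).
Definition sumE n P := Rc n (Cst 0) (addE (Var 1) (lift 1 1 P)).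
Definition allE n P := Rc n (Cst 1) (andE (Var 1) (lift 1 1 P)).
Definition exE n P := Rc n (Cst 0) (orE (Var 1) (lift 1 1 P)).


Lemma predE_ok x env : evalE (predE x) env = pred (evalE x env).
Proof. unfold predE; simpl. destruct (evalE x env); reflexivity. Qed.
#[global] Opaque predE.
Lemma subE_ok0 : True. Proof. exact I. Qed.
Lemma addE_ok x y env : evalE (addE x y) env = (evalE x env + evalE y env)%nat.
Proof. unfold addE; simpl. induction (evalE x env); simpl; auto. Qed.
#[global] Opaque addE.
Lemma subE_ok x y env : evalE (subE x y) env = (evalE x env - evalE y env)%nat.
Proof. unfold subE; simpl. induction (evalE y env); simpl. lia.
  rewrite predE_ok. simpl. rewrite IHn. lia. Qed.
#[global] Opaque subE.



Lemma mulE_ok x y env : evalE (mulE x y) env = (evalE x env * evalE y env)%nat.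
Proof. unfold mulE; simpl. induction (evalE x env); simpl; auto.
  rewrite addE_ok. simpl. rewrite lift02. rewrite IHn. lia. Qed.
#[global] Opaque mulE.
Lemma ifzE_ok c a b env : evalE (ifzE c a b) env =
  match evalE c env with 0 => evalE a env | S _ => evalE b env end.
Proof. unfold ifzE; simpl. destruct (evalE c env); simpl; auto. apply lift02. Qed.
#[global] Opaque ifzE.
Lemma pow2E_ok x env : evalE (pow2E x) env = (2 ^ evalE x env)%nat.
Proof. unfold pow2E; simpl. induction (evalE x env); simpl; auto.
  rewrite addE_ok. simpl. rewrite IHn. lia. Qed.
#[global] Opaque pow2E.
Lemma notE_ok a env : evalE (notE a) env <> 0 <-> evalE a env = 0.
Proof. unfold notE. rewrite ifzE_ok. destruct (evalE a env); simpl; split; congruence. Qed.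
#[global] Opaque notE.
Lemma andE_ok a b env : evalE (andE a b) env <> 0 <-> evalE a env <> 0 /\ evalE b env <> 0.
Proof. unfold andE. rewrite ifzE_ok. destruct (evalE a env); simpl; intuition congruence. Qed.
#[global] Opaque andE.
Lemma orE_ok a b env : evalE (orE a b) env <> 0 <-> evalE a env <> 0 \/ evalE b env <> 0.
Proof. unfold orE. rewrite ifzE_ok. destruct (evalE a env); simpl; intuition congruence. Qed.
#[global] Opaque orE.
Lemma bE_ok a env : evalE (bE a) env = match evalE a env with 0 => 0 | S _ => 1 end.
Proof. unfold bE. rewrite ifzE_ok. reflexivity. Qed.
#[global] Opaque bE.
Lemma leE_ok x y env : evalE (leE x y) env <> 0 <-> (evalE x env <= evalE y env)%nat.
Proof. unfold leE. rewrite notE_ok, subE_ok. lia. Qed.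
#[global] Opaque leE.
Lemma ltE_ok x y env : evalE (ltE x y) env <> 0 <-> (evalE x env < evalE y env)%nat.
Proof. unfold ltE. rewrite leE_ok. simpl. lia. Qed.
#[global] Opaque ltE.
Lemma eqE_ok x y env : evalE (eqE x y) env <> 0 <-> evalE x env = evalE y env.
Proof. unfold eqE. rewrite andE_ok, !leE_ok. lia. Qed.
#[global] Opaque eqE.

Fixpoint sumf (n : nat) (f : nat -> nat) : nat :=
  match n with 0 => 0 | S k => sumf k f + f k end.

Lemma sumE_ok n P env : evalE (sumE n P) env = sumf (evalE n env) (fun i => evalE P (i :: env)).
Proof. unfold sumE; simpl. induction (evalE n env); simpl; auto.
  rewrite addE_ok. simpl. rewrite lift11, IHn0. reflexivity. Qed.
#[global] Opaque sumE.
Lemma allE_ok n P env : evalE (allE n P) env <> 0 <->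
  forall i, (i < evalE n env)%nat -> evalE P (i :: env) <> 0.
Proof. unfold allE; simpl. induction (evalE n env); simpl.
  - split; intros; [lia|lia].
  - rewrite andE_ok. simpl. rewrite lift11. rewrite IHn0. split.
    + intros [H1 H2] i Hi. destruct (Nat.eq_dec i n0). subst; auto. apply H1; lia.
    + intros H. split. intros; apply H; lia. apply H; lia.
Qed.
#[global] Opaque allE.
Lemma exE_ok n P env : evalE (exE n P) env <> 0 <->
  exists i, (i < evalE n env)%nat /\ evalE P (i :: env) <> 0.
Proof. unfold exE; simpl. induction (evalE n env); simpl.
  - split. congruence. intros (i&?&?). lia.
  - rewrite orE_ok. simpl. rewrite lift11. rewrite IHn0. split.
    + intros [(i&?&?)|H]. exists i; split; auto. exists n0; split; auto.
    + intros (i&Hi&H). destruct (Nat.eq_dec i n0). subst; auto. left; exists i; split; auto; lia.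
Qed.
#[global] Opaque exE.

Lemma sumf_ext n f g : (forall i, (i < n)%nat -> f i = g i) -> sumf n f = sumf n g.
Proof. induction n; simpl; intros; auto. rewrite IHn, H; auto. Qed.

Fixpoint ext_free (e : E) : Prop :=
  match e with
  | Var _ | Cst _ => True
  | Suc e => ext_free e
  | Rc n z s => ext_free n /\ ext_free z /\ ext_free s
  | Ext _ _ _ => False
  end.

Open Scope nat_scope.

Fixpoint tri (n : nat) : nat := match n with 0 => 0 | S k => tri k + S k end.

Lemma tri_2 n : 2 * tri n = n * (n + 1).
Proof. induction n; simpl; lia. Qed.

Lemma cpair_tri x y : cpair x y = tri (x + y) + y.
Proof.
  unfold cpair. f_equal. rewrite <- tri_2. rewrite Nat.mul_comm. apply Nat.div_mul. lia.
Qed.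

Lemma tri_mono a b : a <= b -> tri a <= tri b.
Proof. induction 1; simpl; lia. Qed.

Lemma cpair_ge_l x y : x <= cpair x y.
Proof. rewrite cpair_tri. assert (x + y <= tri (x+y)). { clear. induction (x+y); simpl; lia. } lia. Qed.
Lemma cpair_ge_r x y : y <= cpair x y.
Proof. rewrite cpair_tri. lia. Qed.

Definition triE x := Rc x (Cst 0) (addE (Var 1) (Suc (Var 0))).
Lemma triE_ok x env : evalE (triE x) env = tri (evalE x env).
Proof. unfold triE; simpl. induction (evalE x env); simpl; auto.
  rewrite addE_ok. simpl. rewrite IHn. lia. Qed.
#[global] Opaque triE.

Definition cpairE x y := addE (triE (addE x y)) y.
Lemma cpairE_ok x y env : evalE (cpairE x y) env = cpair (evalE x env) (evalE y env).
Proof. unfold cpairE. rewrite addE_ok, triE_ok, addE_ok, cpair_tri. reflexivity. Qed.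
#[global] Opaque cpairE.

Definition sE z := sumE z (bE (leE (triE (Suc (Var 0))) (lift 0 1 z))).
Definition p2E z := subE z (triE (sE z)).
Definition p1E z := subE (sE z) (p2E z).

Lemma sumf_ind_lt n s : sumf n (fun t => if t <? s then 1 else 0) = Nat.min n s.
Proof. induction n; cbn [sumf]. reflexivity. rewrite IHn. destruct (Nat.ltb_spec n s); lia. Qed.

Lemma sE_ok x y z env : evalE z env = cpair x y -> evalE (sE z) env = x + y.
Proof.
  intros H. unfold sE. rewrite sumE_ok. rewrite H.
  rewrite (sumf_ext _ _ (fun t => if t <? x + y then 1 else 0)).
  - rewrite sumf_ind_lt. pose proof (cpair_ge_l x y). pose proof (cpair_ge_r x y).
    assert (x + y <= cpair x y). { rewrite cpair_tri. assert (x + y <= tri (x+y)).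
      { clear. induction (x+y); simpl; lia. } lia. } lia.
  - intros i Hi. rewrite bE_ok.
    destruct (evalE (leE (triE (Suc (Var 0))) (lift 0 1 z)) (i :: env)) eqn:E1.
    + assert (~ (tri (S i) <= cpair x y)).
      { intro C. assert (evalE (leE (triE (Suc (Var 0))) (lift 0 1 z)) (i :: env) <> 0).
        { apply leE_ok. rewrite triE_ok, lift01, H. exact C. } congruence. }
      destruct (Nat.ltb_spec i (x+y)); auto. exfalso. apply H0.
      rewrite cpair_tri. apply Nat.le_trans with (tri (x+y)). apply tri_mono. lia. lia.
    + assert (tri (S i) <= cpair x y).
      { assert (evalE (leE (triE (Suc (Var 0))) (lift 0 1 z)) (i :: env) <> 0) by congruence.
        apply leE_ok in H0. rewrite triE_ok, lift01, H in H0. exact H0. }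
      destruct (Nat.ltb_spec i (x+y)); auto. exfalso.
      rewrite cpair_tri in H0. assert (tri (S (x+y)) <= tri (S i)) by (apply tri_mono; lia).
      simpl in H0, H2. lia.
Qed.

Lemma p2E_ok x y z env : evalE z env = cpair x y -> evalE (p2E z) env = y.
Proof. intros H. unfold p2E. rewrite subE_ok, triE_ok, (sE_ok x y) by auto. rewrite H, cpair_tri. lia. Qed.
Lemma p1E_ok x y z env : evalE z env = cpair x y -> evalE (p1E z) env = x.
Proof. intros H. unfold p1E. rewrite subE_ok, (p2E_ok x y), (sE_ok x y) by auto. lia. Qed.
#[global] Opaque sE p1E p2E.

Definition hdE c := ifzE c (Cst 0) (p1E (predE c)).
Definition tlE c := ifzE c (Cst 0) (p2E (predE c)).
Definition tlnE i c := Rc i c (tlE (Var 1)).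
Definition nthE i c := hdE (tlnE i c).
Definition lenE c := sumE (Suc c) (bE (tlnE (Var 0) (lift 0 1 c))).
Definition prefE m c := Rc m (Cst 0) (Suc (cpairE (nthE (subE (lift 0 2 m) (Suc (Var 0))) (lift 0 2 c)) (Var 1))).

Lemma tlE_ok l c env : evalE c env = code_list l -> evalE (tlE c) env = code_list (tl l).
Proof. intros H. unfold tlE. rewrite ifzE_ok, H. destruct l; simpl. reflexivity.
  apply (p2E_ok n). rewrite predE_ok, H. reflexivity. Qed.
Lemma hdE_ok l c env : evalE c env = code_list l -> evalE (hdE c) env = hd 0 l.
Proof. intros H. unfold hdE. rewrite ifzE_ok, H. destruct l; simpl. reflexivity.
  apply (p1E_ok _ (code_list l)). rewrite predE_ok, H. reflexivity. Qed.
Lemma tlnE_ok l i c env : evalE c env = code_list l -> evalE (tlnE i c) env = code_list (skipn (evalE i env) l).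
Proof. intros H. unfold tlnE. simpl. induction (evalE i env); simpl. exact H.
  rewrite (tlE_ok (skipn n l)). 2: simpl; exact IHn.
  f_equal. clear. revert l; induction n; intros l; simpl. destruct l; reflexivity.
  destruct l; simpl. reflexivity. apply IHn. Qed.
Lemma nthE_ok l i c env : evalE c env = code_list l -> evalE (nthE i c) env = nth (evalE i env) l 0.
Proof. intros H. unfold nthE. rewrite (hdE_ok (skipn (evalE i env) l)).
  2: apply tlnE_ok; auto. generalize (evalE i env). clear. induction l; intros [|n]; simpl; auto. Qed.
#[global] Opaque hdE tlE tlnE nthE.

Lemma code_len l : length l <= code_list l.
Proof. induction l; simpl. lia. pose proof (cpair_ge_r a (code_list l)). lia. Qed.

Lemma code_nil l : code_list l = 0 <-> l = [].
Proof. destruct l; simpl; split; congruence. Qed.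

Lemma lenE_ok l c env : evalE c env = code_list l -> evalE (lenE c) env = length l.
Proof.
  intros H. unfold lenE. rewrite sumE_ok. change (evalE (Suc c) env) with (S (evalE c env)).
  rewrite (sumf_ext _ _ (fun t => if t <? length l then 1 else 0)).
  - rewrite sumf_ind_lt. rewrite H. pose proof (code_len l). lia.
  - intros i Hi. rewrite bE_ok. rewrite (tlnE_ok l). 2: rewrite lift01; exact H.
    simpl. destruct (Nat.ltb_spec i (length l)).
    + destruct (code_list (skipn i l)) eqn:E1; auto. apply code_nil in E1.
      assert (length (skipn i l) = 0) by (rewrite E1; auto). rewrite length_skipn in H1. lia.
    + rewrite skipn_all2 by lia. reflexivity.
Qed.
#[global] Opaque lenE.

Lemma skipn_nth (l : list nat) j : j < length l -> skipn j l = nth j l 0 :: skipn (S j) l.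
Proof. revert j; induction l; intros j Hj; simpl in *. lia. destruct j. reflexivity. apply IHl. lia. Qed.

Lemma prefE_ok l m c env : evalE c env = code_list l -> evalE m env <= length l ->
  evalE (prefE m c) env = code_list (firstn (evalE m env) l).
Proof.
  intros H Hm. unfold prefE. simpl.
  match goal with |- nat_rect _ _ ?f _ = _ =>
  assert (forall r, r <= evalE m env -> nat_rect (fun _ => nat) 0 f r
     = code_list (skipn (evalE m env - r) (firstn (evalE m env) l))) end.
  { induction r; intros Hr; simpl.
    - rewrite Nat.sub_0_r, skipn_all2. reflexivity. rewrite length_firstn. lia.
    - rewrite IHr by lia. rewrite cpairE_ok. rewrite (nthE_ok l). 2: rewrite lift02; exact H.
      rewrite subE_ok, lift02. simpl.
      rewrite (skipn_nth (firstn (evalE m env) l) (evalE m env - S r)).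
      2: rewrite length_firstn; lia.
      change (code_list (?a :: ?t)) with (S (cpair a (code_list t))).
      rewrite nth_firstn.
      destruct (Nat.ltb_spec (evalE m env - S r) (evalE m env)); [|lia].
      replace (S (evalE m env - S r)) with (evalE m env - r) by lia. reflexivity. }
  rewrite H0 by lia. rewrite Nat.sub_diag. reflexivity.
Qed.

Open Scope nat_scope.

Lemma cpair_surj z : exists x y, z = cpair x y.
Proof.
  assert (exists s, tri s <= z < tri (S s)).
  { induction z. exists 0; simpl; lia.
    destruct IHz as [s Hs]. destruct (Nat.eq_dec (S z) (tri (S s))).
    - exists (S s). simpl in *. lia.
    - exists s. simpl in *. lia. }
  destruct H as [s Hs]. simpl in Hs.
  exists (s - (z - tri s)), (z - tri s). rewrite cpair_tri.
  replace (s - (z - tri s) + (z - tri s)) with s by lia. lia.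
Qed.

Lemma cpair_inj x y x' y' : cpair x y = cpair x' y' -> x = x' /\ y = y'.
Proof.
  intros H. split.
  - rewrite <- (p1E_ok x y (Var 0) [cpair x y]) by reflexivity.
    rewrite <- (p1E_ok x' y' (Var 0) [cpair x y]) by (simpl; auto). reflexivity.
  - rewrite <- (p2E_ok x y (Var 0) [cpair x y]) by reflexivity.
    rewrite <- (p2E_ok x' y' (Var 0) [cpair x y]) by (simpl; auto). reflexivity.
Qed.

Lemma code_surj c : exists l, c = code_list l.
Proof.
  induction c as [c IH] using lt_wf_ind. destruct c. exists []; reflexivity.
  destruct (cpair_surj c) as (x & y & ->).
  destruct (IH y) as [l Hl]. pose proof (cpair_ge_r x y). lia.
  exists (x :: l). simpl. rewrite <- Hl. reflexivity.
Qed.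

Lemma code_inj l l' : code_list l = code_list l' -> l = l'.
Proof.
  revert l'; induction l; intros [|a' l'] H; simpl in *; try congruence.
  injection H as H. apply cpair_inj in H as [-> H]. f_equal; auto.
Qed.

Record DC := { nc : PR; nf : nat -> nat; gc : PR; gf : nat -> nat; dc : PR; df : nat -> nat }.

Definition L1 := lift 0 1.
Definition L2 := lift 0 2.

Definition apX a c l := cpairE (cpairE a c) l.

Definition ballIneqE (P : DC) (j l cw e cv : E) : E :=
  let X := apX (nthE j cw) (nthE l cv) l in
  let A := Ext (nc P) (nf P) X in
  let G := Ext (gc P) (gf P) X in
  let D := Suc (Ext (dc P) (df P) X) in
  let Pj := pow2E j in let Pe := pow2E e in let Pl := pow2E l in
  let XX := mulE (mulE Pj Pe) Pl in
  ltE (addE (addE (mulE G XX) (mulE D (mulE Pe Pl))) (mulE (Cst 2) (mulE D (mulE Pj Pe))))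
      (addE (mulE A XX) (mulE D (mulE Pj Pl))).

Definition strictIneqE (P : DC) (j l cw cv : E) : E :=
  let X := apX (nthE j cw) (nthE l cv) l in
  let A := Ext (nc P) (nf P) X in
  let G := Ext (gc P) (gf P) X in
  let D := Suc (Ext (dc P) (df P) X) in
  let Pj := pow2E j in let Pl := pow2E l in
  ltE (addE (mulE A (mulE Pj Pl)) (mulE (Cst 2) (mulE D Pj)))
      (addE (mulE G (mulE Pj Pl)) (mulE D Pl)).

Definition kE n := p1E n.
Definition i0E n := p1E (p2E n).
Definition cwE n := p1E (p2E (p2E n)).
Definition eE n := p2E (p2E (p2E n)).

Definition BallE P (j l n t2 cv : E) : E :=
  andE (ltE j (lenE (cwE n))) (andE (ltE l t2) (ballIneqE P j l (cwE n) (eE n) cv)).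

Definition idxE (k i mm cw' : E) := cpairE (cpairE k i) (prefE mm cw').

Definition ExtE P (cw' i m n t2 cv cb : E) : E :=
  andE (leE (lenE (cwE n)) (lenE cw'))
 (andE (allE (lenE (cwE n)) (eqE (nthE (Var 0) (L1 cw')) (nthE (Var 0) (L1 (cwE n)))))
 (andE (leE (i0E n) i)
 (andE (leE m (lenE cw'))
 (andE (allE (Suc m) (ltE (idxE (L1 (kE n)) (L1 i) (Var 0) (L1 cw')) (L1 t2)))
 (andE (allE m (eqE (nthE (idxE (L1 (kE n)) (L1 i) (Var 0) (L1 cw')) (L1 cb)) (Cst 0)))
 (andE (eqE (nthE (idxE (kE n) i m cw') cb) (Cst 1))
   (allE (lenE cw') (exE (L1 t2) (strictIneqE P (Var 1) (Var 0) (L2 cw') (L2 cv)))))))))).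

Definition WE P (s n t2 cv cb : E) : E :=
  ifzE (p1E s) (BallE P (p1E (p2E s)) (p2E (p2E s)) n t2 cv)
               (ExtE P (p1E (p2E s)) (p1E (p2E (p2E s))) (p2E (p2E (p2E s))) n t2 cv cb).

Definition TestE P (n t2 cv cb : E) : E :=
  exE t2 (WE P (Var 0) (L1 n) (L1 t2) (L1 cv) (L1 cb)).

Definition tE N := p1E N.
Definition cbE N := p2E N.
Definition cnE N := p2E (tE N).
Definition t2E N := p1E (p1E (tE N)).
Definition cvE N := p2E (p1E (tE N)).
Definition has1E N := sumE (lenE (cnE N)) (nthE (Var 0) (L1 (cnE N))).
Definition nE N := sumE (lenE (cnE N)) (mulE (Var 0) (nthE (Var 0) (L1 (cnE N)))).

Definition innerC P N := ifzE (leE (t2E N) (lenE (cvE N))) (Cst 0) (Suc (TestE P (nE N) (t2E N) (cvE N) (cbE N))).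
Definition innerQ P N := ifzE (has1E N) (Cst 0) (Suc (innerC P N)).
Definition progE P : E :=
  ifzE (leE (tE (Var 0)) (lenE (cbE (Var 0)))) (Cst 0) (Suc (innerQ P (Var 0))).

Open Scope nat_scope.

Lemma okV i : ext_ok (Var i). Proof. exact I. Qed.
Lemma okC i : ext_ok (Cst i). Proof. exact I. Qed.
Lemma okS e : ext_ok e -> ext_ok (Suc e). Proof. auto. Qed.
Lemma okR a b c : ext_ok a -> ext_ok b -> ext_ok c -> ext_ok (Rc a b c). Proof. simpl; auto. Qed.
Lemma okL e c k : ext_ok e -> ext_ok (lift c k e). Proof. apply ext_ok_lift. Qed.
Create HintDb okdb.
#[global] Hint Resolve okV okC okS okR okL : okdb.

Ltac okm M := intros; unfold M; auto 20 with okdb.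
Lemma ok_pred x : ext_ok x -> ext_ok (predE x). Proof. Transparent predE. okm predE. Qed.
#[global] Opaque predE.
#[global] Hint Resolve ok_pred : okdb.
Lemma ok_add x y : ext_ok x -> ext_ok y -> ext_ok (addE x y). Proof. Transparent addE. okm addE. Qed.
#[global] Opaque addE.
#[global] Hint Resolve ok_add : okdb.
Lemma ok_sub x y : ext_ok x -> ext_ok y -> ext_ok (subE x y). Proof. Transparent subE. okm subE. Qed.
#[global] Opaque subE.
#[global] Hint Resolve ok_sub : okdb.
Lemma ok_mul x y : ext_ok x -> ext_ok y -> ext_ok (mulE x y). Proof. Transparent mulE. okm mulE. Qed.
#[global] Opaque mulE.
#[global] Hint Resolve ok_mul : okdb.
Lemma ok_ifz x y z : ext_ok x -> ext_ok y -> ext_ok z -> ext_ok (ifzE x y z). Proof. Transparent ifzE. okm ifzE. Qed.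
#[global] Opaque ifzE.
#[global] Hint Resolve ok_ifz : okdb.
Lemma ok_pow2 x : ext_ok x -> ext_ok (pow2E x). Proof. Transparent pow2E. okm pow2E. Qed.
#[global] Opaque pow2E.
#[global] Hint Resolve ok_pow2 : okdb.
Lemma ok_not x : ext_ok x -> ext_ok (notE x). Proof. Transparent notE. okm notE. Qed.
#[global] Opaque notE.
#[global] Hint Resolve ok_not : okdb.
Lemma ok_and x y : ext_ok x -> ext_ok y -> ext_ok (andE x y). Proof. Transparent andE. okm andE. Qed.
#[global] Opaque andE.
#[global] Hint Resolve ok_and : okdb.
Lemma ok_or x y : ext_ok x -> ext_ok y -> ext_ok (orE x y). Proof. Transparent orE. okm orE. Qed.
#[global] Opaque orE.
#[global] Hint Resolve ok_or : okdb.
Lemma ok_b x : ext_ok x -> ext_ok (bE x). Proof. Transparent bE. okm bE. Qed.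
#[global] Opaque bE.
#[global] Hint Resolve ok_b : okdb.
Lemma ok_le x y : ext_ok x -> ext_ok y -> ext_ok (leE x y). Proof. Transparent leE. okm leE. Qed.
#[global] Opaque leE.
#[global] Hint Resolve ok_le : okdb.
Lemma ok_lt x y : ext_ok x -> ext_ok y -> ext_ok (ltE x y). Proof. Transparent ltE. okm ltE. Qed.
#[global] Opaque ltE.
#[global] Hint Resolve ok_lt : okdb.
Lemma ok_eq x y : ext_ok x -> ext_ok y -> ext_ok (eqE x y). Proof. Transparent eqE. okm eqE. Qed.
#[global] Opaque eqE.
#[global] Hint Resolve ok_eq : okdb.
Lemma ok_sum x y : ext_ok x -> ext_ok y -> ext_ok (sumE x y). Proof. Transparent sumE. okm sumE. Qed.
#[global] Opaque sumE.
#[global] Hint Resolve ok_sum : okdb.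
Lemma ok_all x y : ext_ok x -> ext_ok y -> ext_ok (allE x y). Proof. Transparent allE. okm allE. Qed.
#[global] Opaque allE.
#[global] Hint Resolve ok_all : okdb.
Lemma ok_ex x y : ext_ok x -> ext_ok y -> ext_ok (exE x y). Proof. Transparent exE. okm exE. Qed.
#[global] Opaque exE.
#[global] Hint Resolve ok_ex : okdb.
Lemma ok_tri x : ext_ok x -> ext_ok (triE x). Proof. Transparent triE. okm triE. Qed.
#[global] Opaque triE.
#[global] Hint Resolve ok_tri : okdb.
Lemma ok_cpair x y : ext_ok x -> ext_ok y -> ext_ok (cpairE x y). Proof. Transparent cpairE. okm cpairE. Qed.
#[global] Opaque cpairE.
#[global] Hint Resolve ok_cpair : okdb.
Lemma ok_s x : ext_ok x -> ext_ok (sE x). Proof. Transparent sE. okm sE. Qed.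
#[global] Opaque sE.
#[global] Hint Resolve ok_s : okdb.
Lemma ok_p2 x : ext_ok x -> ext_ok (p2E x). Proof. Transparent p2E. okm p2E. Qed.
#[global] Opaque p2E.
#[global] Hint Resolve ok_p2 : okdb.
Lemma ok_p1 x : ext_ok x -> ext_ok (p1E x). Proof. Transparent p1E. okm p1E. Qed.
#[global] Opaque p1E.
#[global] Hint Resolve ok_p1 : okdb.
Lemma ok_hd x : ext_ok x -> ext_ok (hdE x). Proof. Transparent hdE. okm hdE. Qed.
#[global] Opaque hdE.
#[global] Hint Resolve ok_hd : okdb.
Lemma ok_tl x : ext_ok x -> ext_ok (tlE x). Proof. Transparent tlE. okm tlE. Qed.
#[global] Opaque tlE.
#[global] Hint Resolve ok_tl : okdb.
Lemma ok_tln x y : ext_ok x -> ext_ok y -> ext_ok (tlnE x y). Proof. Transparent tlnE. okm tlnE. Qed.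
#[global] Opaque tlnE.
#[global] Hint Resolve ok_tln : okdb.
Lemma ok_nth x y : ext_ok x -> ext_ok y -> ext_ok (nthE x y). Proof. Transparent nthE. okm nthE. Qed.
#[global] Opaque nthE.
#[global] Hint Resolve ok_nth : okdb.
Lemma ok_len x : ext_ok x -> ext_ok (lenE x). Proof. Transparent lenE. okm lenE. Qed.
#[global] Opaque lenE.
#[global] Hint Resolve ok_len : okdb.
Lemma ok_pref x y : ext_ok x -> ext_ok y -> ext_ok (prefE x y). Proof. Transparent prefE. okm prefE. Qed.
#[global] Opaque prefE.
#[global] Hint Resolve ok_pref : okdb.

Definition DCok (P : DC) := (forall m, eval (nc P) [m] (nf P m)) /\ (forall m, eval (gc P) [m] (gf P m)) /\ (forall m, eval (dc P) [m] (df P m)).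

Lemma progE_ok P : DCok P -> ext_ok (progE P).
Proof.
  intros (H1 & H2 & H3).
  assert (forall x, ext_ok x -> ext_ok (Ext (nc P) (nf P) x)) by (simpl; auto).
  assert (forall x, ext_ok x -> ext_ok (Ext (gc P) (gf P) x)) by (simpl; auto).
  assert (forall x, ext_ok x -> ext_ok (Ext (dc P) (df P) x)) by (simpl; auto).
  unfold progE, innerQ, innerC, TestE, WE, ExtE, BallE, idxE, strictIneqE, ballIneqE, apX, kE, i0E, cwE, eE, tE, cbE, cnE, t2E, cvE, has1E, nE, L1, L2.
  unfold progE, innerQ, innerC, TestE, WE, ExtE, BallE, idxE, strictIneqE, ballIneqE, apX, kE, i0E, cwE, eE, tE, cbE, cnE, t2E, cvE, has1E, nE, L1, L2.
  unfold progE, innerQ, innerC, TestE, WE, ExtE, BallE, idxE, strictIneqE, ballIneqE, apX, kE, i0E, cwE, eE, tE, cbE, cnE, t2E, cvE, has1E, nE, L1, L2.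
  cbv zeta.
  Time repeat (match goal with
    | |- ext_ok (ifzE _ _ _) => apply ok_ifz | |- ext_ok (leE _ _) => apply ok_le
    | |- ext_ok (ltE _ _) => apply ok_lt | |- ext_ok (eqE _ _) => apply ok_eq
    | |- ext_ok (andE _ _) => apply ok_and | |- ext_ok (orE _ _) => apply ok_or
    | |- ext_ok (addE _ _) => apply ok_add | |- ext_ok (mulE _ _) => apply ok_mul
    | |- ext_ok (sumE _ _) => apply ok_sum | |- ext_ok (allE _ _) => apply ok_all
    | |- ext_ok (exE _ _) => apply ok_ex | |- ext_ok (pow2E _) => apply ok_pow2
    | |- ext_ok (nthE _ _) => apply ok_nth | |- ext_ok (lenE _) => apply ok_len
    | |- ext_ok (cpairE _ _) => apply ok_cpair | |- ext_ok (p1E _) => apply ok_p1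
    | |- ext_ok (p2E _) => apply ok_p2 | |- ext_ok (prefE _ _) => apply ok_pref
    | |- ext_ok (Suc _) => apply okS | |- ext_ok (lift _ _ _) => apply okL
    | |- ext_ok (Var _) => apply okV | |- ext_ok (Cst _) => apply okC
    | |- ext_ok (Ext (nc P) _ _) => apply H | |- ext_ok (Ext (gc P) _ _) => apply H0
    | |- ext_ok (Ext (dc P) _ _) => apply H4
    end).
Qed.

Lemma prog_computable P : DCok P -> computable_nat (fun n => evalE (progE P) [n]).
Proof. intros H. apply E_computable, progE_ok, H. Qed.

Open Scope nat_scope.

Definition ballInt (P : DC) a c j l e : Prop :=
  let X := cpair (cpair a c) l in
  let A := nf P X in let G := gf P X in let D := S (df P X) in
  let Pj := 2 ^ j in let Pe := 2 ^ e in let Pl := 2 ^ l in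
  let XX := Pj * Pe * Pl in
  G * XX + D * (Pe * Pl) + 2 * (D * (Pj * Pe)) < A * XX + D * (Pj * Pl).

Definition strictInt (P : DC) a c j l : Prop :=
  let X := cpair (cpair a c) l in
  let A := nf P X in let G := gf P X in let D := S (df P X) in
  let Pj := 2 ^ j in let Pl := 2 ^ l in
  A * (Pj * Pl) + 2 * (D * Pj) < G * (Pj * Pl) + D * Pl.

Definition idxS k i (w' : list nat) m := cpair (cpair k i) (code_list (firstn m w')).

Definition ExtSem P k i0 (w : list nat) T (v : list nat) (F : nat -> nat) (w' : list nat) i m : Prop :=
  length w <= length w' /\ (forall j, j < length w -> nth j w' 0 = nth j w 0) /\ i0 <= i /\
  m <= length w' /\ (forall m', m' < S m -> idxS k i w' m' < T) /\
  (forall m', m' < m -> F (idxS k i w' m') = 0) /\ F (idxS k i w' m) = 1 /\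
  (forall j, j < length w' -> exists l, l < T /\ strictInt P (nth j w' 0) (nth l v 0) j l).

Definition WSem P k i0 (w : list nat) e T (v : list nat) (F : nat -> nat) s : Prop :=
  (exists j l, s = cpair 0 (cpair j l) /\ j < length w /\ l < T /\ ballInt P (nth j w 0) (nth l v 0) j l e)
  \/ (exists tag w' i m, tag <> 0 /\ s = cpair tag (cpair (code_list w') (cpair i m)) /\
        ExtSem P k i0 w T v F w' i m).

Definition TestSem P k i0 w e T v F := exists s, s < T /\ WSem P k i0 w e T v F s.

Lemma ballIneqE_ok P j l cw e cv env J Lv w v Ev :
  evalE j env = J -> evalE l env = Lv -> evalE cw env = code_list w -> evalE e env = Ev ->
  evalE cv env = code_list v ->
  (evalE (ballIneqE P j l cw e cv) env <> 0 <-> ballInt P (nth J w 0) (nth Lv v 0) J Lv Ev).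
Proof.
  intros Hj Hl Hw He Hv. unfold ballIneqE, apX. cbv zeta. rewrite ltE_ok.
  repeat progress (rewrite ?addE_ok, ?mulE_ok, ?pow2E_ok, ?cpairE_ok; cbn [evalE]).
  rewrite (nthE_ok w), (nthE_ok v) by auto. rewrite Hj, Hl, He. unfold ballInt. cbv zeta. tauto.
Qed.

Lemma strictIneqE_ok P j l cw cv env J Lv w v :
  evalE j env = J -> evalE l env = Lv -> evalE cw env = code_list w ->
  evalE cv env = code_list v ->
  (evalE (strictIneqE P j l cw cv) env <> 0 <-> strictInt P (nth J w 0) (nth Lv v 0) J Lv).
Proof.
  intros Hj Hl Hw Hv. unfold strictIneqE, apX. cbv zeta. rewrite ltE_ok.
  repeat progress (rewrite ?addE_ok, ?mulE_ok, ?pow2E_ok, ?cpairE_ok; cbn [evalE]).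
  rewrite (nthE_ok w), (nthE_ok v) by auto. rewrite Hj, Hl. unfold strictInt. cbv zeta. tauto.
Qed.

Lemma dec_ok n env k i0 w e : evalE n env = cpair k (cpair i0 (cpair (code_list w) e)) ->
  evalE (kE n) env = k /\ evalE (i0E n) env = i0 /\ evalE (cwE n) env = code_list w /\ evalE (eE n) env = e.
Proof.
  intros H. unfold kE, i0E, cwE, eE.
  assert (H2 : evalE (p2E n) env = cpair i0 (cpair (code_list w) e)) by (apply (p2E_ok k); auto).
  assert (H3 : evalE (p2E (p2E n)) env = cpair (code_list w) e) by (apply (p2E_ok i0); auto).
  split; [apply (p1E_ok _ _ _ _ H)|]. split; [apply (p1E_ok _ _ _ _ H2)|].
  split; [apply (p1E_ok _ _ _ _ H3)| apply (p2E_ok _ _ _ _ H3)].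
Qed.

Lemma iff_and_dep (P1 P2 Q1 Q2 : Prop) : (P1 <-> Q1) -> (Q1 -> (P2 <-> Q2)) -> (P1 /\ P2 <-> Q1 /\ Q2).
Proof. tauto. Qed.

Lemma idxE_ok k i mm cw' env K I M w' : evalE k env = K -> evalE i env = I -> evalE mm env = M ->
  evalE cw' env = code_list w' -> M <= length w' -> evalE (idxE k i mm cw') env = idxS K I w' M.
Proof. intros. unfold idxE, idxS. rewrite !cpairE_ok, (prefE_ok w'); subst; auto. Qed.

Lemma ExtE_ok P cw' i m n t2 cv cb env k i0 w e T v B w' I Mv :
  evalE n env = cpair k (cpair i0 (cpair (code_list w) e)) -> evalE t2 env = T ->
  evalE cv env = code_list v -> evalE cb env = code_list B ->
  evalE cw' env = code_list w' -> evalE i env = I -> evalE m env = Mv ->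
  (evalE (ExtE P cw' i m n t2 cv cb) env <> 0 <-> ExtSem P k i0 w T v (fun x => nth x B 0) w' I Mv).
Proof.
  intros Hn Ht Hv Hb Hw' Hi Hm. destruct (dec_ok _ _ _ _ _ _ Hn) as (Hk & Hi0 & Hw & He).
  unfold ExtE, ExtSem. unfold L1, L2.
  rewrite andE_ok. apply iff_and_dep.
  { rewrite leE_ok, (lenE_ok w), (lenE_ok w') by auto. tauto. } intros C1.
  rewrite andE_ok. apply iff_and_dep.
  { rewrite allE_ok, (lenE_ok w) by auto. split; intros H j Hj; specialize (H j Hj).
    - rewrite eqE_ok, (nthE_ok w'), (nthE_ok w) in H by (rewrite lift01; auto). exact H.
    - rewrite eqE_ok, (nthE_ok w'), (nthE_ok w) by (rewrite lift01; auto). exact H. } intros C2.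
  rewrite andE_ok. apply iff_and_dep.
  { rewrite leE_ok, Hi0, Hi. tauto. } intros C3.
  rewrite andE_ok. apply iff_and_dep.
  { rewrite leE_ok, (lenE_ok w'), Hm by auto. tauto. } intros C4.
  rewrite andE_ok. apply iff_and_dep.
  { rewrite allE_ok. cbn [evalE]. rewrite Hm. split; intros H j Hj; specialize (H j Hj).
    - rewrite ltE_ok, (idxE_ok _ _ _ _ _ k I j w'), lift01 in H; rewrite ?lift01; auto. rewrite Ht in H. exact H. lia.
    - rewrite ltE_ok, (idxE_ok _ _ _ _ _ k I j w'), lift01; rewrite ?lift01; auto. rewrite Ht. exact H. lia. } intros C5.
  rewrite andE_ok. apply iff_and_dep.
  { rewrite allE_ok. rewrite Hm. split; intros H j Hj; specialize (H j Hj).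
    - rewrite eqE_ok, (nthE_ok B), (idxE_ok _ _ _ _ _ k I j w') in H; rewrite ?lift01; auto. lia.
    - rewrite eqE_ok, (nthE_ok B), (idxE_ok _ _ _ _ _ k I j w'); rewrite ?lift01; auto. lia. } intros C6.
  rewrite andE_ok. apply iff_and_dep.
  { rewrite eqE_ok, (nthE_ok B), (idxE_ok _ _ _ _ _ k I Mv w'); auto. tauto. } intros C7.
  rewrite allE_ok, (lenE_ok w') by auto. split; intros H j Hj; specialize (H j Hj).
  - rewrite exE_ok in H. destruct H as (l & Hl & H). rewrite lift01, Ht in Hl.
    rewrite (strictIneqE_ok _ _ _ _ _ _ j l w' v) in H; [|reflexivity|reflexivity|rewrite lift02; auto|rewrite lift02; auto].
    exists l; auto.
  - destruct H as (l & Hl & H). rewrite exE_ok. exists l. rewrite lift01, Ht. split; auto.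
    rewrite (strictIneqE_ok _ _ _ _ _ _ j l w' v); [|reflexivity|reflexivity|rewrite lift02; auto|rewrite lift02; auto].
  exact H.
Qed.

Lemma BallE_ok P j l n t2 cv env k i0 w e T v J Lv :
  evalE n env = cpair k (cpair i0 (cpair (code_list w) e)) -> evalE t2 env = T ->
  evalE cv env = code_list v -> evalE j env = J -> evalE l env = Lv ->
  (evalE (BallE P j l n t2 cv) env <> 0 <->
   J < length w /\ Lv < T /\ ballInt P (nth J w 0) (nth Lv v 0) J Lv e).
Proof.
  intros Hn Ht Hv Hj Hl. destruct (dec_ok _ _ _ _ _ _ Hn) as (Hk & Hi0 & Hw & He).
  unfold BallE. rewrite !andE_ok, !ltE_ok, (lenE_ok w) by auto.
  rewrite (ballIneqE_ok _ _ _ _ _ _ _ J Lv w v e) by auto. rewrite Hj, Hl, Ht. tauto.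
Qed.

Lemma WE_ok P s n t2 cv cb env k i0 w e T v B S0 :
  evalE n env = cpair k (cpair i0 (cpair (code_list w) e)) -> evalE t2 env = T ->
  evalE cv env = code_list v -> evalE cb env = code_list B -> evalE s env = S0 ->
  (evalE (WE P s n t2 cv cb) env <> 0 <-> WSem P k i0 w e T v (fun x => nth x B 0) S0).
Proof.
  intros Hn Ht Hv Hb Hs. unfold WE, WSem.
  destruct (cpair_surj S0) as (tag & rest & HS).
  assert (Hs' : evalE s env = cpair tag rest) by congruence. rewrite ifzE_ok, (p1E_ok tag rest) by auto.
  assert (Hr : evalE (p2E s) env = rest) by (apply (p2E_ok tag rest); auto).
  destruct tag.
  - destruct (cpair_surj rest) as (j & l & HR). rewrite HR in Hr.
    rewrite (BallE_ok _ _ _ _ _ _ _ k i0 w e T v j l); auto.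
    2: apply (p1E_ok j l); auto. 2: apply (p2E_ok j l); auto.
    split.
    + intros H. left. exists j, l. rewrite HS, HR. auto.
    + intros [(j'&l'&Heq&H)|(tag&w'&i&m&Ht0&Heq&_)].
      * rewrite HS, HR in Heq. apply cpair_inj in Heq as [_ Heq].
        apply cpair_inj in Heq as [-> ->]. auto.
      * rewrite HS in Heq. apply cpair_inj in Heq as [Heq _]. congruence.
  - destruct (cpair_surj rest) as (cw' & r2 & HR). destruct (cpair_surj r2) as (i & m & HR2).
    destruct (code_surj cw') as (w' & Hw'). subst cw'.
    rewrite HR, HR2 in Hr.
    assert (H1 : evalE (p1E (p2E s)) env = code_list w') by (apply (p1E_ok _ (cpair i m)); auto).
    assert (H2 : evalE (p2E (p2E s)) env = cpair i m) by (apply (p2E_ok (code_list w')); auto).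
    rewrite (ExtE_ok _ _ _ _ _ _ _ _ env k i0 w e T v B w' i m); auto.
    2: apply (p1E_ok i m); auto. 2: apply (p2E_ok i m); auto.
    split.
    + intros H. right. exists (S tag), w', i, m. rewrite HS, HR, HR2. auto.
    + intros [(j'&l'&Heq&H)|(tag'&w''&i'&m'&Ht0&Heq&H)].
      * rewrite HS in Heq. apply cpair_inj in Heq as [Heq _]. congruence.
      * rewrite HS, HR, HR2 in Heq. apply cpair_inj in Heq as [_ Heq].
        apply cpair_inj in Heq as [Heq Heq2]. apply code_inj in Heq. subst w''.
        apply cpair_inj in Heq2 as [-> ->]. exact H.
Qed.

Lemma TestE_ok P n t2 cv cb env k i0 w e T v B :
  evalE n env = cpair k (cpair i0 (cpair (code_list w) e)) -> evalE t2 env = T ->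
  evalE cv env = code_list v -> evalE cb env = code_list B ->
  (evalE (TestE P n t2 cv cb) env <> 0 <-> TestSem P k i0 w e T v (fun x => nth x B 0)).
Proof.
  intros Hn Ht Hv Hb. unfold TestE, TestSem, L1. rewrite exE_ok, Ht.
  split; intros (s & Hs & H); exists s; split; auto.
  - rewrite (WE_ok _ _ _ _ _ _ _ k i0 w e T v B s) in H; auto; rewrite lift01; auto.
  - rewrite (WE_ok _ _ _ _ _ _ _ k i0 w e T v B s); auto; rewrite lift01; auto.
Qed.

Open Scope nat_scope.

Lemma prog_eq P t B : evalE (progE P) [cpair t (code_list B)] =
  if t <=? length B then S (evalE (innerQ P (Var 0)) [cpair t (code_list B)]) else 0.
Proof.
  unfold progE. rewrite ifzE_ok. unfold tE, cbE.
  destruct (evalE (leE (p1E (Var 0)) (lenE (p2E (Var 0)))) [cpair t (code_list B)]) eqn:E1.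
  - assert (~ t <= length B).
    { intro C. assert (evalE (leE (p1E (Var 0)) (lenE (p2E (Var 0)))) [cpair t (code_list B)] <> 0).
      { apply leE_ok. rewrite (p1E_ok t (code_list B)), (lenE_ok B); auto. apply (p2E_ok t); auto. }
      congruence. }
    destruct (Nat.leb_spec t (length B)); [lia|reflexivity].
  - assert (t <= length B).
    { assert (evalE (leE (p1E (Var 0)) (lenE (p2E (Var 0)))) [cpair t (code_list B)] <> 0) by congruence.
      apply leE_ok in H. rewrite (p1E_ok t (code_list B)), (lenE_ok B) in H; auto. apply (p2E_ok t); auto. }
    destruct (Nat.leb_spec t (length B)); [reflexivity|lia].
Qed.

Lemma innerQ_eq P t1 Nn B : let N := cpair (cpair t1 (code_list Nn)) (code_list B) in
  evalE (innerQ P (Var 0)) [N] =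
  if sumf (length Nn) (fun j => nth j Nn 0) =? 0 then 0 else S (evalE (innerC P (Var 0)) [N]).
Proof.
  intros N. unfold innerQ. rewrite ifzE_ok. unfold has1E.
  assert (Hcn : evalE (cnE (Var 0)) [N] = code_list Nn).
  { unfold cnE, tE. apply (p2E_ok t1). apply (p1E_ok _ (code_list B)). reflexivity. }
  rewrite sumE_ok, (lenE_ok Nn) by auto.
  rewrite (sumf_ext _ _ (fun j => nth j Nn 0)).
  2: { intros i _. unfold L1. rewrite (nthE_ok Nn); auto. }
  destruct (sumf (length Nn) (fun j => nth j Nn 0)); reflexivity.
Qed.

Lemma innerC_eq P T V Nn B : let N := cpair (cpair (cpair T (code_list V)) (code_list Nn)) (code_list B) in
  evalE (innerC P (Var 0)) [N] =
  if T <=? length V then S (evalE (TestE P (nE (Var 0)) (t2E (Var 0)) (cvE (Var 0)) (cbE (Var 0))) [N]) else 0.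
Proof.
  intros N. unfold innerC. rewrite ifzE_ok.
  assert (Ht1 : evalE (p1E (tE (Var 0))) [N] = cpair T (code_list V)).
  { unfold tE. apply (p1E_ok _ (code_list Nn)). apply (p1E_ok _ (code_list B)). reflexivity. }
  assert (HT : evalE (t2E (Var 0)) [N] = T) by (unfold t2E; apply (p1E_ok _ (code_list V)); auto).
  assert (HV : evalE (cvE (Var 0)) [N] = code_list V) by (unfold cvE; apply (p2E_ok T); auto).
  destruct (evalE (leE (t2E (Var 0)) (lenE (cvE (Var 0)))) [N]) eqn:E1.
  - assert (~ T <= length V).
    { intro C. assert (evalE (leE (t2E (Var 0)) (lenE (cvE (Var 0)))) [N] <> 0).
      { apply leE_ok. rewrite HT, (lenE_ok V); auto. } congruence. }
    destruct (Nat.leb_spec T (length V)); [lia|reflexivity].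
  - assert (T <= length V).
    { assert (evalE (leE (t2E (Var 0)) (lenE (cvE (Var 0)))) [N] <> 0) by congruence.
      apply leE_ok in H. rewrite HT, (lenE_ok V) in H; auto. }
    destruct (Nat.leb_spec T (length V)); [reflexivity|lia].
Qed.

Lemma test_eq P T V Nn B k i0 w e : let N := cpair (cpair (cpair T (code_list V)) (code_list Nn)) (code_list B) in
  sumf (length Nn) (fun j => j * nth j Nn 0) = cpair k (cpair i0 (cpair (code_list w) e)) ->
  (evalE (TestE P (nE (Var 0)) (t2E (Var 0)) (cvE (Var 0)) (cbE (Var 0))) [N] <> 0 <->
   TestSem P k i0 w e T V (fun x => nth x B 0)).
Proof.
  intros N Hn.
  assert (Ht : evalE (tE (Var 0)) [N] = cpair (cpair T (code_list V)) (code_list Nn))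
    by (unfold tE; apply (p1E_ok _ (code_list B)); reflexivity).
  assert (Ht1 : evalE (p1E (tE (Var 0))) [N] = cpair T (code_list V))
    by (apply (p1E_ok _ (code_list Nn)); auto).
  assert (HT : evalE (t2E (Var 0)) [N] = T) by (unfold t2E; apply (p1E_ok _ (code_list V)); auto).
  assert (HV : evalE (cvE (Var 0)) [N] = code_list V) by (unfold cvE; apply (p2E_ok T); auto).
  assert (HB : evalE (cbE (Var 0)) [N] = code_list B) by (unfold cbE; apply (p2E_ok (cpair (cpair T (code_list V)) (code_list Nn)) (code_list B)); reflexivity).
  assert (Hcn : evalE (cnE (Var 0)) [N] = code_list Nn) by (unfold cnE; apply (p2E_ok (cpair T (code_list V))); auto).
  apply (TestE_ok _ _ _ _ _ _ k i0 w e T V B); auto.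
  unfold nE. rewrite sumE_ok, (lenE_ok Nn) by auto. rewrite <- Hn. apply sumf_ext.
  intros i _. rewrite mulE_ok. unfold L1. rewrite (nthE_ok Nn); auto.
Qed.

Open Scope R_scope. Open Scope R_scope.

Definition apr (P : DC) (X : nat) : R := (INR (nf P X) - INR (gf P X)) / INR (S (df P X)).

Lemma pow2_pos j : 0 < 2 ^ j.
Proof. apply pow_lt. lra. Qed.

Lemma INR_pow2 j : INR (2 ^ j) = 2 ^ j.
Proof. rewrite pow_INR. reflexivity. Qed.

Lemma sign_lemma a b c d K : 0 < K -> a - b = (c - d) / K -> (b < a <-> d < c).
Proof.
  intros HK H. split; intros H1.
  - assert (0 < a - b) by lra. rewrite H in H0.
    assert (0 < (c - d)) . { apply Rmult_lt_reg_r with (/ K). apply Rinv_0_lt_compat; auto.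
      rewrite Rmult_0_l. exact H0. } lra.
  - assert (0 < (c - d) / K). { apply Rdiv_lt_0_compat; lra. } lra.
Qed.

Lemma ball_real P a c j l e : ballInt P a c j l e <->
  / 2 ^ j - / 2 ^ e + 2 * / 2 ^ l < apr P (cpair (cpair a c) l).
Proof.
  unfold ballInt, apr. cbv zeta.
  set (X := cpair (cpair a c) l).
  pose proof (pow2_pos j). pose proof (pow2_pos e). pose proof (pow2_pos l).
  assert (HD : 0 < INR (S (df P X))) by (apply lt_0_INR; lia).
  rewrite (sign_lemma _ _
    (INR (nf P X) * (2^j*2^e*2^l) + INR (S (df P X)) * (2^j*2^l))
    (INR (gf P X) * (2^j*2^e*2^l) + INR (S (df P X)) * (2^e*2^l) + 2 * (INR (S (df P X)) * (2^j*2^e)))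
    (INR (S (df P X)) * (2^j*2^e*2^l))).
  - split; intros H2.
    + apply lt_INR in H2. rewrite !plus_INR, !mult_INR, !INR_pow2 in H2. simpl (INR 2) in H2. lra.
    + apply INR_lt. rewrite !plus_INR, !mult_INR, !INR_pow2. simpl (INR 2). lra.
  - apply Rmult_lt_0_compat; auto. apply Rmult_lt_0_compat; auto. apply Rmult_lt_0_compat; auto.
  - field. repeat split; lra.
Qed.

Lemma strict_real P a c j l : strictInt P a c j l <->
  apr P (cpair (cpair a c) l) + 2 * / 2 ^ l < / 2 ^ j.
Proof.
  unfold strictInt, apr. cbv zeta.
  set (X := cpair (cpair a c) l).
  pose proof (pow2_pos j). pose proof (pow2_pos l).
  assert (HD : 0 < INR (S (df P X))) by (apply lt_0_INR; lia).
  rewrite (sign_lemma _ _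
    (INR (gf P X) * (2^j*2^l) + INR (S (df P X)) * 2^l)
    (INR (nf P X) * (2^j*2^l) + 2 * (INR (S (df P X)) * 2^j))
    (INR (S (df P X)) * (2^j*2^l))).
  - split; intros H2.
    + apply lt_INR in H2. rewrite !plus_INR, !mult_INR, !INR_pow2 in H2. simpl (INR 2) in H2. lra.
    + apply INR_lt. rewrite !plus_INR, !mult_INR, !INR_pow2. simpl (INR 2). lra.
  - apply Rmult_lt_0_compat; auto. apply Rmult_lt_0_compat; auto.
  - field. repeat split; lra.
Qed.

Lemma small_pow g : 0 < g -> exists l, / 2 ^ l < g.
Proof.
  intros Hg. destruct (archimed (/ g)) as [H1 _].
  assert (0 < / g) by (apply Rinv_0_lt_compat; auto).
  destruct (up (/ g)) as [|p|p] eqn:E; simpl in H1.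
  - lra.
  - exists (Pos.to_nat p). rewrite <- positive_nat_Z, <- INR_IZR_INZ in H1.
    assert (INR (Pos.to_nat p) <= 2 ^ Pos.to_nat p).
    { clear. induction (Pos.to_nat p). simpl; lra. rewrite S_INR. simpl.
      assert (1 <= 2 ^ n) by (apply pow_R1_Rle; lra). lra. }
    assert (/ g < 2 ^ Pos.to_nat p) by lra.
    rewrite <- (Rinv_inv g). apply Rinv_lt_contravar; auto.
    apply Rmult_lt_0_compat; auto. apply pow2_pos.
  - pose proof (IZR_lt _ _ (Pos2Z.neg_is_neg p)). simpl in H1. lra.
Qed.

Lemma pow_inv_mono a b : (a <= b)%nat -> / 2 ^ b <= / 2 ^ a.
Proof.
  intros H. apply Rinv_le_contravar. apply pow2_pos. apply Rle_pow; auto. lra.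
Qed.

Open Scope R_scope.

Lemma nth_pref (p : baire) m i : (i < m)%nat -> nth i (pref p m) 0%nat = p i.
Proof.
  intros H. unfold pref. rewrite (nth_indep _ 0%nat (p 0%nat)) by (rewrite length_map, length_seq; auto).
  rewrite map_nth, seq_nth; auto.
Qed.
Lemma length_pref (p : baire) m : length (pref p m) = m.
Proof. unfold pref. rewrite length_map, length_seq. auto. Qed.

Definition DCapprox (M : cmetric_space) (P : DC) := forall i j k,
  Rabs (apr P (cpair (cpair i j) k) - cm_d M (cm_seq M i) (cm_seq M j)) <= / 2 ^ k.

Definition strictw (M : cmetric_space) (w : list nat) (x : M) :=
  forall j, (j < length w)%nat -> cm_d M (cm_seq M (nth j w 0%nat)) x < / 2 ^ j.

Definition ExtWit (M : cmetric_space) (b : baire) k i0 w (x : M) := exists w' i m,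
  (length w <= length w')%nat /\ (forall j, (j < length w)%nat -> nth j w' 0%nat = nth j w 0%nat) /\
  (i0 <= i)%nat /\ (m <= length w')%nat /\ (forall m', (m' < m)%nat -> b (idxS k i w' m') = 0%nat) /\
  b (idxS k i w' m) = 1%nat /\ strictw M w' x.

Definition BallOut (M : cmetric_space) (w : list nat) e (x : M) := exists j, (j < length w)%nat /\
  / 2 ^ j - / 2 ^ e < cm_d M (cm_seq M (nth j w 0%nat)) x.

Definition Body M b k i0 w e x := BallOut M w e x \/ ExtWit M b k i0 w x.

Lemma bound_fin (f : nat -> nat) n : exists K, forall i, (i < n)%nat -> (f i < K)%nat.
Proof. induction n. exists 0%nat; intros; lia. destruct IHn as [K HK].
  exists (S (K + f n)). intros i Hi. destruct (Nat.eq_dec i n). subst; lia. specialize (HK i). lia. Qed.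

Lemma bound_fin_ex (Q : nat -> nat -> Prop) n : (forall i, (i < n)%nat -> exists l, Q i l) ->
  exists K, forall i, (i < n)%nat -> exists l, (l < K)%nat /\ Q i l.
Proof. induction n; intros H. exists 0%nat; intros; lia.
  destruct IHn as [K HK]. intros; apply H; lia. destruct (H n) as [l Hl]. lia.
  exists (S (K + l)). intros i Hi. destruct (Nat.eq_dec i n). subst; exists l; split; auto; lia.
  destruct (HK i) as (l' & ? & ?). lia. exists l'; split; auto; lia. Qed.

Lemma TestSem_F P k i0 w e T v F G : (forall i, (i < T)%nat -> F i = G i) ->
  TestSem P k i0 w e T v F -> TestSem P k i0 w e T v G.
Proof.
  intros HFG (s & Hs & [H|(tag&w'&i&m&Ht&Heq&H)]). exists s; split; auto; left; auto.
  exists s. split; auto. right. exists tag, w', i, m. split; auto. split; auto.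
  destruct H as (C1&C2&C3&C4&C5&C6&C7&C8). repeat split; auto.
  - intros m' Hm'. rewrite <- HFG by (apply C5; lia). apply C6; auto.
  - rewrite <- HFG by (apply C5; lia). auto.
Qed.


Lemma abs_bounds u v r : Rabs (u - v) <= r -> u <= v + r /\ v - r <= u.
Proof. intros H. unfold Rabs in H. destruct (Rcase_abs (u - v)); lra. Qed.

Lemma dtri (M : cmetric_space) (a z x : M) : cm_d M a x <= cm_d M a z + cm_d M z x.
Proof. apply cm_d_tri. Qed.
Lemma dtri2 (M : cmetric_space) (a z x : M) : cm_d M a z <= cm_d M a x + cm_d M z x.
Proof. rewrite (cm_d_sym M z x). apply cm_d_tri. Qed.

Lemma ball_sound (M : cmetric_space) P (x : M) a yl j l e : DCapprox M P -> cm_d M (cm_seq M yl) x <= / 2 ^ l ->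
  ballInt P a yl j l e -> / 2 ^ j - / 2 ^ e < cm_d M (cm_seq M a) x.
Proof.
  intros HP Hy H. apply ball_real in H. destruct (abs_bounds _ _ _ (HP a yl l)) as [H1 H2].
  pose proof (dtri2 M (cm_seq M a) (cm_seq M yl) x). lra.
Qed.

Lemma strict_sound (M : cmetric_space) P (x : M) a yl j l : DCapprox M P -> cm_d M (cm_seq M yl) x <= / 2 ^ l ->
  strictInt P a yl j l -> cm_d M (cm_seq M a) x < / 2 ^ j.
Proof.
  intros HP Hy H. apply strict_real in H. destruct (abs_bounds _ _ _ (HP a yl l)) as [H1 H2].
  pose proof (dtri M (cm_seq M a) (cm_seq M yl) x). lra.
Qed.

Lemma ball_complete (M : cmetric_space) P (x : M) (y : baire) a j e : DCapprox M P -> (forall i, cm_d M (cm_seq M (y i)) x <= / 2 ^ i) ->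
  / 2 ^ j - / 2 ^ e < cm_d M (cm_seq M a) x -> exists l, ballInt P a (y l) j l e.
Proof.
  intros HP Hy H. destruct (small_pow ((cm_d M (cm_seq M a) x - (/ 2 ^ j - / 2 ^ e)) / 4)) as [l Hl]. lra.
  exists l. apply ball_real. destruct (abs_bounds _ _ _ (HP a (y l) l)) as [H1 H2].
  pose proof (dtri M (cm_seq M a) (cm_seq M (y l)) x). pose proof (Hy l). lra.
Qed.

Lemma strict_complete (M : cmetric_space) P (x : M) (y : baire) a j : DCapprox M P -> (forall i, cm_d M (cm_seq M (y i)) x <= / 2 ^ i) ->
  cm_d M (cm_seq M a) x < / 2 ^ j -> exists l, strictInt P a (y l) j l.
Proof.
  intros HP Hy H. destruct (small_pow ((/ 2 ^ j - cm_d M (cm_seq M a) x) / 4)) as [l Hl]. lra.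
  exists l. apply strict_real. destruct (abs_bounds _ _ _ (HP a (y l) l)) as [H1 H2].
  pose proof (dtri2 M (cm_seq M a) (cm_seq M (y l)) x). pose proof (Hy l). lra.
Qed.

Theorem test_sem (M : cmetric_space) P b k i0 w e (x : M) (y : baire) : DCapprox M P ->
  (forall i, cm_d M (cm_seq M (y i)) x <= / 2 ^ i) ->
  (Body M b k i0 w e x <-> exists T, TestSem P k i0 w e T (pref y T) b).
Proof.
  intros HP Hy. split.
  - intros [(j & Hj & H)|(w' & i & m & C1 & C2 & C3 & C4 & C6 & C7 & C8)].
    + destruct (ball_complete M P x y _ _ _ HP Hy H) as [l Hl].
      exists (S (cpair 0 (cpair j l) + l)). exists (cpair 0 (cpair j l)). split. lia.
      left. exists j, l. repeat split; auto. lia. rewrite nth_pref by lia. auto.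
    + destruct (bound_fin_ex (fun j l => strictInt P (nth j w' 0%nat) (y l) j l) (length w')) as [K HK].
      { intros j Hj. apply (strict_complete M P x y); auto. }
      destruct (bound_fin (fun m' => idxS k i w' m') (S m)) as [K2 HK2].
      set (s := cpair 1 (cpair (code_list w') (cpair i m))).
      exists (S (s + K + K2)). exists s. split. lia. right. exists 1%nat, w', i, m.
      split. lia. split. reflexivity. repeat split; auto.
      * intros m' Hm'. specialize (HK2 m' Hm'). simpl in HK2. lia.
      * intros j Hj. destruct (HK j Hj) as (l & Hl & H). exists l. split. lia.
        rewrite nth_pref by lia. auto.
  - intros (T & s & Hs & [(j & l & Heq & Hj & Hl & H)|(tag & w' & i & m & Ht & Heq & C1 & C2 & C3 & C4 & C5 & C6 & C7 & C8)]).
    + left. exists j. split; auto. rewrite nth_pref in H by lia.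
      apply (ball_sound M P x _ (y l) j l e); auto.
    + right. exists w', i, m. repeat split; auto.
      intros j Hj. destruct (C8 j Hj) as (l & Hl & H). rewrite nth_pref in H by lia.
      apply (strict_sound M P x _ (y l) j l); auto.
Qed.

Open Scope R_scope.

Definition Us (M : cmetric_space) (b : baire) (n : nat) (x : M) : Prop :=
  exists k i0 w e, n = cpair k (cpair i0 (cpair (code_list w) e)) /\ Body M b k i0 w e x.

Lemma dens (M : cmetric_space) (x : M) j : exists i, cm_d M (cm_seq M i) x < / 2 ^ j.
Proof.
  destruct (cm_dense M x (/ 2 ^ j)) as [i Hi]. apply Rinv_0_lt_compat, pow2_pos.
  exists i. rewrite cm_d_sym. exact Hi.
Qed.

Definition densf (M : cmetric_space) (x : M) (j : nat) : nat :=
  proj1_sig (constructive_indefinite_description _ (dens M x j)).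
Lemma densf_ok M x j : cm_d M (cm_seq M (densf M x j)) x < / 2 ^ j.
Proof. unfold densf. destruct (constructive_indefinite_description _ _). auto. Qed.

Lemma firstn_pref (p : baire) m L : (m <= L)%nat -> firstn m (pref p L) = pref p m.
Proof.
  intros H. apply nth_ext with 0%nat 0%nat.
  - rewrite length_firstn, !length_pref. lia.
  - intros i Hi. rewrite length_firstn, length_pref in Hi. rewrite nth_firstn.
    destruct (Nat.ltb_spec i m); [|lia]. rewrite !nth_pref by lia. auto.
Qed.

Lemma n_decomp n : exists k i0 w e, n = cpair k (cpair i0 (cpair (code_list w) e)).
Proof.
  destruct (cpair_surj n) as (k & r & ->). destruct (cpair_surj r) as (i0 & r2 & ->).
  destruct (cpair_surj r2) as (cw & e & ->). destruct (code_surj cw) as (w & ->).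
  exists k, i0, w, e. reflexivity.
Qed.

Lemma Us_iff M b k i0 w e x : Us M b (cpair k (cpair i0 (cpair (code_list w) e))) x <-> Body M b k i0 w e x.
Proof.
  split.
  - intros (k' & i0' & w' & e' & Heq & H). apply cpair_inj in Heq as [<- Heq].
    apply cpair_inj in Heq as [<- Heq]. apply cpair_inj in Heq as [Heq <-].
    apply code_inj in Heq. subst. auto.
  - intros H. exists k, i0, w, e. auto.
Qed.

Definition Rreal (M : cmetric_space) (b : baire) (U : M -> Prop) :=
  realizes (cauchy M) rep_S' b U.

Lemma sigma2_left (M : cmetric_space) b U (x : M) n : Rreal M b U -> ~ Us M b n x -> U x.
Proof.
  intros HR HU. destruct (n_decomp n) as (k & i0 & w & e & ->).
  rewrite Us_iff in HU. unfold Body in HU.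
  assert (Hball : forall j, (j < length w)%nat -> cm_d M (cm_seq M (nth j w 0%nat)) x <= / 2 ^ j - / 2 ^ e).
  { intros j Hj. apply Rnot_lt_le. intro C. apply HU. left. exists j. auto. }
  set (p := fun j => if Nat.ltb j (length w) then nth j w 0%nat else densf M x j).
  assert (Hp : forall j, cm_d M (cm_seq M (p j)) x < / 2 ^ j).
  { intros j. unfold p. destruct (Nat.ltb_spec j (length w)).
    - specialize (Hball j H). pose proof (pow2_pos e). assert (0 < / 2 ^ e) by (apply Rinv_0_lt_compat; auto). lra.
    - apply densf_ok. }
  destruct (HR p x) as (q & Hq & r & Hr & HU').
  { intros i. simpl. apply Rlt_le, Hp. }
  simpl in HU'. unfold delta_S in HU'. apply HU'.
  exists k. intro Hrk.
  destruct (Hr k) as [i1 Hi1].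
  set (i := Nat.max i0 i1).
  destruct (Hq (cpair k i)) as (m & Hm1 & Hm2 & Hm3).
  rewrite Hi1 in Hm3 by lia. rewrite Hrk in Hm3.
  apply HU. right.
  set (L := Nat.max m (length w)).
  exists (pref p L), i, m. rewrite length_pref. repeat split.
  - lia.
  - intros j Hj. rewrite nth_pref by lia. unfold p. destruct (Nat.ltb_spec j (length w)); [auto|lia].
  - lia.
  - lia.
  - intros m' Hm'. unfold idxS. rewrite firstn_pref by lia. apply Hm2; auto.
  - unfold idxS. rewrite firstn_pref by lia.
    destruct (b (cpair (cpair k i) (code_list (pref p m)))) as [|[|z]]; simpl in *; congruence.
  - intros j Hj. rewrite length_pref in Hj. rewrite nth_pref by lia. apply Hp.
Qed.

Lemma e_exists (M : cmetric_space) (w : list nat) (x : M) : strictw M w x ->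
  exists e, forall j, (j < length w)%nat -> cm_d M (cm_seq M (nth j w 0%nat)) x <= / 2 ^ j - / 2 ^ e.
Proof.
  intros Hs.
  destruct (bound_fin_ex (fun j e => / 2 ^ e < / 2 ^ j - cm_d M (cm_seq M (nth j w 0%nat)) x) (length w)) as [K HK].
  { intros j Hj. apply small_pow. specialize (Hs j Hj). lra. }
  exists K. intros j Hj. destruct (HK j Hj) as (e & He & H). pose proof (pow_inv_mono e K ltac:(lia)). lra.
Qed.

Definition Good (M : cmetric_space) (b : baire) (x : M) (w : list nat) k i0 (w' : list nat) : Prop :=
  strictw M w' x /\ (length w < length w')%nat /\
  (forall j, (j < length w)%nat -> nth j w' 0%nat = nth j w 0%nat) /\
  exists i m, (i0 <= i)%nat /\ (m <= length w')%nat /\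
    (forall m', (m' < m)%nat -> b (idxS k i w' m') = 0%nat) /\ b (idxS k i w' m) = 1%nat.

Lemma step (M : cmetric_space) b (x : M) w k i0 : (forall n, Us M b n x) -> strictw M w x -> exists w', Good M b x w k i0 w'.
Proof.
  intros HU Hs. destruct (e_exists M w x Hs) as [e He].
  specialize (HU (cpair k (cpair i0 (cpair (code_list w) e)))). rewrite Us_iff in HU.
  destruct HU as [(j & Hj & H)|(w'' & i & m & C1 & C2 & C3 & C4 & C6 & C7 & C8)].
  - specialize (He j Hj). lra.
  - exists (w'' ++ [densf M x (length w'')]).
    assert (Hf : forall m', (m' <= length w'')%nat -> firstn m' (w'' ++ [densf M x (length w'')]) = firstn m' w'').
    { intros m' Hm'. rewrite firstn_app. replace (m' - length w'')%nat with 0%nat by lia. simpl. apply app_nil_r. }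
    unfold Good. rewrite length_app. simpl. split; [|split; [|split]].
    + intros j' Hj'. rewrite length_app in Hj'. simpl in Hj'.
      destruct (Nat.ltb_spec j' (length w'')).
      * rewrite app_nth1 by auto. apply C8; auto.
      * replace j' with (length w'') by lia. rewrite app_nth2 by lia. rewrite Nat.sub_diag. apply densf_ok.
    + lia.
    + intros j' Hj'. rewrite app_nth1 by lia. auto.
    + exists i, m. repeat split; auto. lia.
      * intros m' Hm'. unfold idxS. rewrite Hf by lia. apply C6; auto.
      * unfold idxS. rewrite Hf by lia. auto.
Qed.

Definition up1 (n : nat) : nat := evalE (p1E (Var 0)) [n].
Definition up2 (n : nat) : nat := evalE (p2E (Var 0)) [n].
Lemma up1_ok a c : up1 (cpair a c) = a. Proof. unfold up1. exact (p1E_ok a c (Var 0) [cpair a c] eq_refl). Qed.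
Lemma up2_ok a c : up2 (cpair a c) = c. Proof. unfold up2. exact (p2E_ok a c (Var 0) [cpair a c] eq_refl). Qed.

Lemma sigma2_right (M : cmetric_space) b U (x : M) : Rreal M b U -> U x -> exists n, ~ Us M b n x.
Proof.
  intros HR Hx. apply NNPP. intro Hn.
  assert (HU : forall n, Us M b n x). { intros n. apply NNPP. intro C. apply Hn. exists n. auto. }
  assert (Hch : forall w k i0, exists w', strictw M w x -> Good M b x w k i0 w').
  { intros w k i0. destruct (classic (strictw M w x)) as [H|H].
    - destruct (step M b x w k i0 HU H) as [w' Hw']. exists w'. auto.
    - exists w. intro C. contradiction. }
  set (F := fun w k i0 => proj1_sig (constructive_indefinite_description _ (Hch w k i0))).
  assert (HF : forall w k i0, strictw M w x -> Good M b x w k i0 (F w k i0)).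
  { intros w k i0. unfold F. destruct (constructive_indefinite_description _ _). auto. }
  set (W := fix W (n : nat) : list nat := match n with 0%nat => [] | S n => F (W n) (up1 n) (up2 n) end).
  assert (HWs : forall n, strictw M (W n) x /\ (n <= length (W n))%nat).
  { induction n as [|n [IH1 IH2]].
    - split. intros j Hj. simpl in Hj. lia. simpl. lia.
    - simpl. destruct (HF (W n) (up1 n) (up2 n) IH1) as (G1 & G2 & _). split; auto. lia. }
  assert (HWp : forall n n' j, (n <= n')%nat -> (j < length (W n))%nat -> nth j (W n') 0%nat = nth j (W n) 0%nat).
  { intros n n' j Hle. induction Hle; intros Hj; auto.
    simpl. destruct (HF (W m) (up1 m) (up2 m) (proj1 (HWs m))) as (G1 & G2 & G3 & _).
    rewrite G3. auto. pose proof (HWs m). 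
    assert (length (W n) <= length (W m))%nat.
    { clear -Hle HF HWs. induction Hle. lia. simpl. destruct (HF (W m) (up1 m) (up2 m) (proj1 (HWs m))) as (G1 & G2 & _). lia. }
    lia. }
  set (p := fun j => nth j (W (S j)) 0%nat).
  assert (Hpn : forall n j, (j < length (W n))%nat -> p j = nth j (W n) 0%nat).
  { intros n j Hj. unfold p. pose proof (proj2 (HWs (S j))).
    rewrite <- (HWp (S j) (Nat.max n (S j)) j) by lia.
    rewrite (HWp n (Nat.max n (S j)) j); auto; lia. }
  assert (Hps : forall j, cm_d M (cm_seq M (p j)) x < / 2 ^ j).
  { intros j. unfold p. apply (proj1 (HWs (S j))). pose proof (proj2 (HWs (S j))). lia. }
  assert (Hpref : forall n m, (m <= length (W n))%nat -> pref p m = firstn m (W n)).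
  { intros n m Hm. apply nth_ext with 0%nat 0%nat.
    - rewrite length_pref, length_firstn. lia.
    - intros i Hi. rewrite length_pref in Hi. rewrite nth_pref by auto. rewrite nth_firstn.
      destruct (Nat.ltb_spec i m); [|lia]. apply Hpn. lia. }
  destruct (HR p x) as (q & Hq & r & Hr & HU').
  { intros i. simpl. apply Rlt_le, Hps. }
  simpl in HU'. unfold delta_S in HU'. apply HU' in Hx. destruct Hx as [k Hk].
  destruct (Hr k) as [i1 Hi1].
  set (n := cpair k i1).
  destruct (HF (W n) (up1 n) (up2 n) (proj1 (HWs n))) as (G1 & G2 & G3 & i & m & G4 & G5 & G6 & G7).
  assert (HWSn : W (S n) = F (W n) k i1).
  { change (F (W n) (up1 n) (up2 n) = F (W n) k i1). unfold n. rewrite up1_ok, up2_ok. reflexivity. }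
  unfold n in G4, G5, G6, G7. rewrite ?up1_ok, ?up2_ok in G4. rewrite ?up1_ok, ?up2_ok in G5.
  rewrite ?up1_ok, ?up2_ok in G6. rewrite ?up1_ok, ?up2_ok in G7. fold n in G5, G6, G7.
  rewrite <- HWSn in G5, G6, G7.
  destruct (Hq (cpair k i)) as (m2 & Hm1 & Hm2 & Hm3).
  assert (Hidx : forall m', (m' <= m)%nat -> cpair (cpair k i) (code_list (pref p m')) = idxS k i (W (S n)) m').
  { intros m' Hm'. unfold idxS. rewrite (Hpref (S n)) by lia. reflexivity. }
  assert (m2 = m).
  { destruct (Nat.lt_trichotomy m2 m) as [Hlt|[Heq|Hgt]]; auto.
    - exfalso. apply Hm1. rewrite Hidx by lia. apply G6; auto.
    - exfalso. specialize (Hm2 m Hgt). rewrite Hidx in Hm2 by lia. congruence. }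
  subst m2. rewrite Hidx in Hm3 by lia. rewrite G7 in Hm3. simpl in Hm3.
  rewrite Hi1 in Hm3 by lia. congruence.
Qed.

Lemma sigma2 (M : cmetric_space) b U : Rreal M b U -> forall x, U x <-> exists n, ~ Us M b n x.
Proof.
  intros HR x. split. apply sigma2_right; auto. intros [n Hn]. apply (sigma2_left M b U x n); auto.
Qed.

Lemma sumf_e (e : baire) n m : (forall k, e k = if Nat.eqb k n then 1%nat else 0%nat) ->
  sumf (length (pref e m)) (fun j => nth j (pref e m) 0%nat) = if Nat.ltb n m then 1%nat else 0%nat.
Proof.
  intros He. rewrite length_pref. rewrite (sumf_ext _ _ e) by (intros; apply nth_pref; auto).
  induction m; simpl. reflexivity. rewrite IHm, He.
  destruct (Nat.ltb_spec n m), (Nat.eqb_spec m n), (Nat.ltb_spec n (S m)); lia.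
Qed.

Lemma sumf_e2 (e : baire) n : (forall k, e k = if Nat.eqb k n then 1%nat else 0%nat) ->
  sumf (length (pref e (S n))) (fun j => (j * nth j (pref e (S n)) 0)%nat) = n.
Proof.
  intros He. rewrite length_pref. rewrite (sumf_ext _ _ (fun j => (j * e j)%nat)) by (intros; rewrite nth_pref; auto).
  assert (forall m, (m <= n)%nat -> sumf m (fun j => (j * e j)%nat) = 0%nat).
  { induction m; intros Hm; simpl. auto. rewrite IHm by lia. rewrite He.
    destruct (Nat.eqb_spec m n); lia. }
  simpl. rewrite H by lia. rewrite He, Nat.eqb_refl. lia.
Qed.

Theorem proposition25 (M : cmetric_space) :
  computable_mv (rep_O' (cauchy M)) (rep_C rep_nat (rep_O (cauchy M)))
    (fun (U : M -> Prop) (Us : nat -> M -> Prop) =>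
       forall x : M, U x <-> exists n : nat, ~ Us n x).
Proof.
  destruct (cm_dist_computable M) as (num & neg & den & [cn Hcn] & [cg Hcg] & [cd Hcd] & Happ).
  set (P := Build_DC cn num cg neg cd den).
  assert (HP : DCapprox M P) by (intros i j k; apply Happ).
  assert (HPok : DCok P) by (split; [|split]; auto).
  exists (fun N => evalE (progE P) [N]). split. apply prog_computable; auto.
  intros b U HbU.
  set (q := fun t => evalE (innerQ P (Var 0)) [cpair t (code_list (pref b t))]).
  exists q. split.
  { intros t. exists t. rewrite !prog_eq, length_pref. split; [|split].
    - destruct (Nat.leb_spec t t); [congruence|lia].
    - intros m' Hm'. rewrite prog_eq, length_pref. destruct (Nat.leb_spec t m'); [lia|auto].
    - destruct (Nat.leb_spec t t); [reflexivity|lia]. }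
  exists (Us M b). split.
  2: { intros x. apply (sigma2 M b U HbU). }
  intros e n He. simpl in He.
  set (tt := fun t1 => cpair t1 (code_list (pref e (S n)))).
  set (c := fun t1 => evalE (innerC P (Var 0)) [cpair (tt t1) (code_list (pref b (tt t1)))]).
  exists c. split.
  { intros t1. exists (S n). unfold q.
    rewrite !innerQ_eq, !(sumf_e e n) by auto.
    split; [|split].
    - destruct (Nat.ltb_spec n (S n)); [simpl; congruence|lia].
    - intros m' Hm'. rewrite innerQ_eq, (sumf_e e n) by auto. destruct (Nat.ltb_spec n m'); [lia|auto].
    - destruct (Nat.ltb_spec n (S n)); [simpl; reflexivity|lia]. }
  intros y x Hy. simpl in Hy.
  set (N := fun T => cpair (cpair (cpair T (code_list (pref y T))) (code_list (pref e (S n))))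
            (code_list (pref b (tt (cpair T (code_list (pref y T))))))).
  set (s := fun T => evalE (TestE P (nE (Var 0)) (t2E (Var 0)) (cvE (Var 0)) (cbE (Var 0))) [N T]).
  exists s. split.
  { intros T. exists T. unfold c, tt. rewrite !innerC_eq, length_pref. split; [|split].
    - destruct (Nat.leb_spec T T); [congruence|lia].
    - intros m' Hm'. rewrite innerC_eq, length_pref. destruct (Nat.leb_spec T m'); [lia|auto].
    - destruct (Nat.leb_spec T T); [reflexivity|lia]. }
  simpl. unfold delta_S.
  destruct (n_decomp n) as (k & i0 & w & e' & Hn).
  rewrite Hn, Us_iff. rewrite (test_sem M P b k i0 w e' x y HP Hy).
  split.
  - intros (T & HT). exists T. unfold s, N. rewrite (test_eq P T (pref y T) (pref e (S n)) _ k i0 w e').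
    2: { rewrite <- Hn. apply sumf_e2; auto. }
    apply (TestSem_F _ _ _ _ _ _ _ b); auto.
    intros i Hi. rewrite nth_pref; auto. unfold tt.
    pose proof (cpair_ge_l T (code_list (pref y T))).
    pose proof (cpair_ge_l (cpair T (code_list (pref y T))) (code_list (pref e (S n)))). lia.
  - intros (T & HT). exists T. unfold s, N in HT. rewrite (test_eq P T (pref y T) (pref e (S n)) _ k i0 w e') in HT.
    2: { rewrite <- Hn. apply sumf_e2; auto. }
    apply (TestSem_F _ _ _ _ _ _ _ _ b) in HT; auto.
    intros i Hi. rewrite nth_pref; auto. unfold tt.
    pose proof (cpair_ge_l T (code_list (pref y T))).
    pose proof (cpair_ge_l (cpair T (code_list (pref y T))) (code_list (pref e (S n)))). lia.
Qed.
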